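(* Let $U$ be a finite set, and let $S_1,S_2,\dots,S_{2^{|U|}}$ be any ordering of all subsets of $U$. For nonempty $V\subseteq U$ define $V^0=V$ and, for $r\ge0$, $V^{r+1}=V^r\setminus S_{r+1}$ if $S_{r+1}$ crosses $V^r$ and $V^{r+1}=V^r$ otherwise; the final set $V^{2^{|U|}}$ is a singleton $\{p\}$, and we say ''$p$ is last in $V$''. Then for any sets $T\subseteq V\subseteq U$ and any point $p\in V\setminus T$: if $p$ is last in $V$, then $p$ is last in $V\setminus T$.
   Context: A set $A$ crosses a set $B$ if both $B\cap A$ and $B\setminus A$ are nonempty. In the paper the ordering arises randomly: given weights $z_S\ge0$ for $S\subseteq U$, independent exponential random variables $X_S\sim\exp(z_S)$ are drawn for sets with $z_S>0$, sets are ordered by increasing $X_S$, and sets with $z_S=0$ are appended in a fixed arbitrary order; the statement holds for every outcome of this ordering. *)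

(* Defs.v *)
From mathcomp Require Import all_boot.
Set Implicit Arguments. Unset Strict Implicit. Unset Printing Implicit Defensive.

Definition crosses (U : finType) (A B : {set U}) : bool :=
  (B :&: A != set0) && (B :\: A != set0).

Definition is_ordering (U : finType) (s : seq {set U}) : Prop :=
  uniq s /\ (forall S : {set U}, S \in s).

Definition refine_step (U : finType) (V S : {set U}) : {set U} :=
  if crosses S V then V :\: S else V.

Definition final_set (U : finType) (s : seq {set U}) (V : {set U}) : {set U} :=
  foldl (@refine_step U) V s.

Definition last_in (U : finType) (s : seq {set U}) (V : {set U}) (p : U) : Prop :=
  final_set s V = [set p].

(* Main.v *)
Require Import Defs.
From mathcomp Require Import all_boot.
Set Implicit Arguments. Unset Strict Implicit. Unset Printing Implicit Defensive.

Lemma fold_sub (U : finType) (s : seq {set U}) (W : {set U}) :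
  final_set s W \subset W.
Proof.
elim: s W => [|a s IH] W /=; first exact: subxx.
apply: subset_trans (IH _) _.
rewrite /refine_step; case: ifP => _; [exact: subsetDl | exact: subxx].
Qed.

Lemma step_lem (U : finType) (S W W' : {set U}) (p : U) :
  W' \subset W -> p \in W' -> p \in refine_step W S ->
  (p \in refine_step W' S) && (refine_step W' S \subset refine_step W S).
Proof.
move=> sub pW'; rewrite /refine_step /crosses.
case: (boolP ((W :&: S != set0) && (W :\: S != set0))) => cW;
case: (boolP ((W' :&: S != set0) && (W' :\: S != set0))) => cW'.
- move=> pWS; move: (pWS); rewrite !inE => /andP[pS _].
  by rewrite pS pW' /= setSD.
- move=> pWS; move: (pWS); rewrite !inE => /andP[pS _].
  rewrite pW' /=.
  move: cW'; rewrite negb_and !negbK => /orP[/eqP E|/eqP E].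
  + apply/subsetP => x xW'; rewrite inE (subsetP sub) // andbT.
    apply/negP => xS; have : x \in W' :&: S by rewrite inE xW' xS.
    by rewrite E inE.
  + have : p \in W' :\: S by rewrite inE pS pW'.
    by rewrite E inE.
- move=> pW; move: cW; rewrite negb_and !negbK => /orP[/eqP E|/eqP E].
  + have pS : p \notin S.
      apply/negP => pS; have : p \in W :&: S by rewrite inE pW pS.
      by rewrite E inE.
    rewrite inE pS pW' /=.
    exact: subset_trans (subsetDl _ _) sub.
  + exfalso; move: cW' => /andP[_ /set0Pn[x]].
    rewrite inE => /andP[xS xW'].
    have : x \in W :\: S by rewrite inE xS (subsetP sub).
    by rewrite E inE.
- by move=> _; rewrite pW' sub.
Qed.

Lemma key (U : finType) (s : seq {set U}) (W W' : {set U}) (p : U) :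
  W' \subset W -> p \in W' -> p \in final_set s W ->
  (p \in final_set s W') && (final_set s W' \subset final_set s W).
Proof.
elim: s W W' => [|a s IH] W W' sub pW' pf /=; first by rewrite pW' sub.
have pa : p \in refine_step W a by apply: (subsetP (fold_sub s _)).
case/andP: (step_lem sub pW' pa) => h1 h2.
exact: IH.
Qed.

Theorem lemma2p4 (U : finType) (s : seq {set U}) (T V : {set U}) (p : U) :
  is_ordering s ->
  T \subset V ->
  p \in V :\: T ->
  last_in s V p ->
  last_in s (V :\: T) p.
Proof.
move=> _ _ pVT; rewrite /last_in => E.
have pf : p \in final_set s V by rewrite E set11.
case/andP: (key (subsetDl V T) pVT pf) => h1; rewrite E => h2.
apply/eqP; rewrite eqEsubset h2 sub1set h1 //.
Qed.
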